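(* Let $\alpha\approx1.465571$ be the real root of $x^3-x^2-1$ lying between $1$ and $2$. Every graph of pathwidth at most $1$ and order $n$ has at most $\alpha^n$ induced matchings. Moreover, the number of induced matchings of the path on $n$ vertices is at least $0.89\,\alpha^n+o(1)$; in particular it is $\Theta(\alpha^n)$.
   Context: An induced matching of a graph $G=(V,E)$ is here a set $D\subseteq V$ such that every vertex of $D$ has exactly one neighbour in $D$ (equivalently, the set of edges of $G[D]$ is a matching whose vertex set is $D$ and which is an induced subgraph); i.e. a $(\{1\},\mathbb{N})$-dominating set, where $D$ is $(\sigma,\rho)$-dominating if $|N(v)\cap D|\in\sigma$ for $v\in D$ and $|N(v)\cap D|\in\rho$ for $v\notin D$. The empty set counts. Order = number of vertices; pathwidth is the standard notion. *)

(* Defs.v *)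
(* Simple graphs: symmetric irreflexive relation e on a finType T. *)
From HB Require Import structures.
From mathcomp Require Import all_boot all_order all_algebra.
Set Implicit Arguments. Unset Strict Implicit. Unset Printing Implicit Defensive.
Import Order.TTheory GRing.Theory Num.Theory.

Definition nbrs_in (T : finType) (e : rel T) (D : {set T}) (v : T) : {set T} :=
  [set u in D | e v u].

Definition sr_dominating (T : finType) (e : rel T) (sigma rho : pred nat)
    (D : {set T}) : bool :=
  [forall v, if v \in D then sigma #|nbrs_in e D v| else rho #|nbrs_in e D v|].

Definition induced_matching (T : finType) (e : rel T) (D : {set T}) : bool :=
  sr_dominating e (pred1 1%N) predT D.

Definition num_induced_matchings (T : finType) (e : rel T) : nat :=
  #|[set D : {set T} | induced_matching e D]|.

Definition path_decomposition (T : finType) (e : rel T) (B : seq {set T}) : Prop :=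
  [/\ (forall v : T, exists2 X, X \in B & v \in X),
      (forall u v : T, e u v -> exists2 X, X \in B & (u \in X) && (v \in X)) &
      (forall (v : T) (i j k : nat), (i <= j <= k)%N -> (k < size B)%N ->
          v \in nth set0 B i -> v \in nth set0 B k -> v \in nth set0 B j)].

(* width of a decomposition = (max bag size) - 1; pathwidth <= w iff there is a
   path decomposition all of whose bags have size <= w + 1 *)
Definition pathwidth_le (T : finType) (e : rel T) (w : nat) : Prop :=
  exists2 B : seq {set T}, path_decomposition e B & forall X, X \in B -> (#|X| <= w.+1)%N.

Definition path_rel (n : nat) : rel 'I_n :=
  fun i j => ((val i).+1 == val j) || ((val j).+1 == val i).

(* Main.v *)
Require Import Defs.
From HB Require Import structures.
From mathcomp Require Import all_boot all_order all_algebra.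
From mathcomp Require Import zify ring lra.
Import Order.TTheory GRing.Theory Num.Theory.
Section Gen.
Variables (T : finType) (e : rel T).
Hypothesis esym : symmetric e.
Hypothesis eirr : irreflexive e.

Definition IMb (D : {set T}) := induced_matching e D.

Lemma imP (D : {set T}) : reflect (forall v, v \in D -> #|nbrs_in e D v| = 1%N) (IMb D).
Proof.
apply: (iffP forallP) => H v.
  by move=> vD; move: (H v); rewrite vD /= => /eqP.
by case vD: (v \in D) => //=; rewrite H.
Qed.

Definition fS (S : {set T}) := #|[set D : {set T} | (D \subset S) && IMb D]|.

Definition gS (S : {set T}) v := #|[set D : {set T} | (D \subset S) && IMb D && (v \in D)]|.

Lemma fS_split S v : fS S = (fS (S :\ v) + gS S v)%N.
Proof.
rewrite /fS /gS -(cardsID [set D : {set T} | v \in D]) addnC; congr (_ + _)%N.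
  by apply: eq_card => D; rewrite !inE subsetD1 -!andbA; do 2 bool_congr.
by apply: eq_card => D; rewrite !inE.
Qed.

Lemma nbrs_sub (D S : {set T}) v : D \subset S -> nbrs_in e D v \subset nbrs_in e S v.
Proof.
move=> /subsetP DS; apply/subsetP => x; rewrite !inE => /andP[xD ->].
by rewrite DS.
Qed.

Lemma gS_iso S v : #|nbrs_in e S v| = 0%N -> gS S v = 0%N.
Proof.
move=> h; apply/eqP; rewrite cards_eq0; apply/eqP/setP => D; rewrite !inE.
apply/negP => /andP[/andP[DS /imP im] vD].
by have := subset_leq_card (nbrs_sub _ _ v DS); rewrite h im.
Qed.

Lemma one_sub (A : {set T}) u : A \subset [set u] -> #|A| = 1%N -> A = [set u].
Proof.
move=> Au /eqP/cards1P[x Ax]; subst A.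
by move: Au; rewrite sub1set inE => /eqP ->.
Qed.

Lemma one_in (A : {set T}) u : u \in A -> #|A| = 1%N -> A = [set u].
Proof.
move=> uA /eqP/cards1P[x Ax]; subst A.
by move: uA; rewrite inE => /eqP ->.
Qed.

Lemma gS_leaf S v u : nbrs_in e S v = [set u] ->
  (gS S v <= fS [set x in S | (x != u) && (x != v) && ~~ e u x])%N.
Proof.
move=> hN.
set G := [set D : {set T} | (D \subset S) && IMb D && (v \in D)].
set h := fun D : {set T} => D :\: [set u; v].
have key : forall D, D \in G -> (D \subset S /\ IMb D) /\ [/\ v \in D, u \in D,
     nbrs_in e D v = [set u] & nbrs_in e D u = [set v]].
  move=> D; rewrite inE => /andP[/andP[DS im] vD]; move/imP: (im) => im'.
  have hv : nbrs_in e D v = [set u].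
    by apply: one_sub; [rewrite -hN; exact: nbrs_sub | exact: im'].
  have : u \in nbrs_in e D v by rewrite hv set11.
  rewrite inE => /andP[uD evu]; split => //; split => //.
  by apply: one_in; [rewrite inE vD esym | exact: im'].
have rest : forall D x, D \in G -> x \in D -> x != u -> x != v ->
    ~~ e u x /\ ~~ e v x.
  move=> D x /key[_ [_ _ hv hu]] xD xu xv; split; apply/negP => E.
    have : x \in nbrs_in e D u by rewrite inE xD E.
    by rewrite hu inE (negbTE xv).
  have : x \in nbrs_in e D v by rewrite inE xD E.
  by rewrite hv inE (negbTE xu).
have inj : {in G &, injective h}.
  move=> D1 D2 G1 G2 eq12; apply/setP => x.
  case: (key _ G1) => _ [v1 u1 _ _]; case: (key _ G2) => _ [v2 u2 _ _].
  have /setP := eq12 => /(_ x); rewrite !inE.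
  by case: eqP => [->|_]; case: eqP => [->|_] //=; rewrite ?u1 ?u2 ?v1 ?v2.
rewrite /gS -/G -(card_in_imset inj) /fS; apply: subset_leq_card.
apply/subsetP => _ /imsetP[D GD ->]; rewrite inE.
case: (key _ GD) => [[DS imD] [vD uD hv hu]].
apply/andP; split.
  apply/subsetP => x; rewrite !inE negb_or => /andP[/andP[xu xv] xD].
  by rewrite xu xv (subsetP DS) //= (rest D x GD xD xu xv).1.
apply/imP => x; rewrite !inE negb_or => /andP[/andP[xu xv] xD].
have [nu nv] := rest D x GD xD xu xv.
move/imP: imD => /(_ x xD) <-; apply: eq_card => y; rewrite !inE.
case: eqP => [->|_] /=; first by rewrite esym (negbTE nu) andbF.
by case: eqP => [->|_] //=; rewrite esym (negbTE nv) andbF.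
Qed.
End Gen.
Arguments fS {T} e S.
Arguments gS {T} e S v.
Arguments IMb {T} e D.
Arguments fS_split {T} e S v.
Arguments gS_iso {T e} S v _.
Arguments gS_leaf {T e} esym {S v u} _.

Section Gen2.
Variables (T : finType) (e : rel T).
Hypothesis esym : symmetric e.
Hypothesis eirr : irreflexive e.
Hypothesis Pdeg : forall S : {set T}, S != set0 ->
  exists2 v, v \in S & (#|nbrs_in e S v| <= 1)%N.
Local Open Scope ring_scope.
Variables (R : rcfType) (alpha : R).
Hypotheses (a1 : 1 <= alpha) (a2 : 2%:R <= alpha ^+ 2)
  (a3 : alpha ^+ 3 = alpha ^+ 2 + 1).

Lemma fS_upper : forall S : {set T}, (fS e S)%:R <= alpha ^+ #|S|.
Proof.
move=> S; have [n] := ubnP #|S|; elim: n S => // n IH S hS.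
have IH' : forall X : {set T}, forall k, (#|X| <= k)%N -> (#|X| < #|S|)%N ->
    (fS e X)%:R <= alpha ^+ k.
  move=> X k Xk XS; apply: le_trans (IH X _) _; first by apply: leq_trans XS _.
  exact: ler_weXn2l.
have [S0|SN0] := eqVneq S set0.
  subst S; rewrite cards0 expr0 -[1]/(1%:R) ler_nat /fS.
  apply: leq_trans (subset_leq_card (_ : _ \subset [set set0])) _; last by rewrite cards1.
  by apply/subsetP => D; rewrite !inE subset0 => /andP[/eqP -> _].
have [v vS hv] := Pdeg S SN0.
have cSv : #|S| = (#|S :\ v|).+1 by rewrite (cardsD1 v S) vS.
move: hv; rewrite leq_eqVlt ltnS leqn0 => /orP[/cards1P[u hu] | /eqP h0]; last first.
  rewrite (fS_split e S v) gS_iso ?(eqP h0) // addn0.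
  by apply: IH'; rewrite cSv.
have : u \in nbrs_in e S v by rewrite hu set11.
rewrite inE => /andP[uS evu].
have uv : u != v by apply/eqP => E; move: evu; rewrite E eirr.
have hS'' := gS_leaf esym hu.
set S'' := [set x in S | _] in hS''.
have cSvu : #|S :\ v| = (#|S :\ v :\ u|).+1 by rewrite (cardsD1 u (S :\ v)) !inE uv uS.
have sub1 : S'' \subset S :\ v :\ u.
  by apply/subsetP => x; rewrite !inE => /and3P[-> /andP[-> ->] _].
have le1 : (fS e S <= fS e (S :\ v) + fS e S'')%N by rewrite (fS_split e S v) leq_add2l.
apply: le_trans (_ : (fS e (S :\ v))%:R + (fS e S'')%:R <= _); first by rewrite -natrD ler_nat.
case: (boolP [exists w, (w \in S) && (w != v) && e u w]) => [/existsP[w /andP[/andP[wS wv] euw]] | /existsPn nw].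
  have wu : w != u by apply/eqP => E; move: euw; rewrite E eirr.
  set m := #|S :\ v :\ u :\ w|.
  have cSvuw : #|S :\ v :\ u| = m.+1 by rewrite (cardsD1 w (S :\ v :\ u)) !inE wu wv wS.
  have sub2 : S'' \subset S :\ v :\ u :\ w.
    apply/subsetP => x; rewrite !inE => /and3P[xS /andP[xu xv] nux].
    rewrite xS xu xv !andbT; apply/eqP => E; by move: nux; rewrite E euw.
  have b1 : (fS e (S :\ v))%:R <= alpha ^+ m.+2 by apply: IH'; rewrite ?cSv cSvu cSvuw.
  have b2 : (fS e S'')%:R <= alpha ^+ m.
    apply: IH'; first exact: (subset_leq_card sub2).
    rewrite cSv cSvu cSvuw ltnS; apply: leq_trans (subset_leq_card sub2) _.
    by apply: leq_trans (leqnSn m) (leqnSn _).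
  apply: le_trans (lerD b1 b2) _.
  rewrite cSv cSvu cSvuw.
  have -> : alpha ^+ m.+3 = alpha ^+ m.+2 + alpha ^+ m.
    by rewrite -[m.+3]/(3 + m)%N exprD a3 mulrDl mul1r -exprD.
  exact: lexx.
have h0 : #|nbrs_in e (S :\ v) u| = 0%N.
  apply/eqP; rewrite cards_eq0; apply/eqP/setP => y; rewrite !inE.
  apply/negP => /andP[/andP[yv yS] euy].
  by move: (nw y); rewrite yS yv euy.
have b1 : (fS e (S :\ v))%:R <= alpha ^+ #|S :\ v :\ u|.
  rewrite (fS_split e (S :\ v) u) gS_iso // addn0.
  by apply: IH'; rewrite // cSv cSvu ltnS leqnSn.
have b2 : (fS e S'')%:R <= alpha ^+ #|S :\ v :\ u|.
  apply: IH'; first exact: (subset_leq_card sub1).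
  by rewrite cSv cSvu ltnS (leq_trans (subset_leq_card sub1)) ?leqnSn.
apply: le_trans (lerD b1 b2) _.
rewrite cSv cSvu.
have am : 0 <= alpha ^+ #|S :\ v :\ u| by apply: exprn_ge0; apply: le_trans a1.
have -> : alpha ^+ (#|S :\ v :\ u|).+2 = alpha ^+ 2 * alpha ^+ #|S :\ v :\ u|.
  by rewrite -exprD.
by rewrite -mulr2n -mulr_natl; apply: ler_wpM2r.
Qed.
End Gen2.
Section Pw.
Variables (T : finType) (e : rel T).
Hypothesis esym : symmetric e.
Hypothesis eirr : irreflexive e.

Lemma pw_Pdeg : pathwidth_le e 1 -> forall S : {set T}, S != set0 ->
  exists2 v, v \in S & (#|nbrs_in e S v| <= 1)%N.
Proof.
case=> B [cov edg intp] bsz S /set0Pn[v0 v0S].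
pose fst (x : T) := find (fun X : {set T} => x \in X) B.
have hasx : forall x, has (fun X : {set T} => x \in X) B.
  by move=> x; have [X XB xX] := cov x; apply/hasP; exists X.
have infst : forall x, x \in nth set0 B (fst x) by move=> x; exact: (nth_find set0 (hasx x)).
have fst_le : forall x i, x \in nth set0 B i -> (fst x <= i)%N.
  move=> x i xi; rewrite leqNgt; apply/negP => /(before_find set0).
  by rewrite xi.
have bag : forall x y, e x y -> exists i, [/\ (i < size B)%N, x \in nth set0 B i & y \in nth set0 B i].
  move=> x y /edg[X XB /andP[xX yX]]; exists (index X B).
  by rewrite index_mem nth_index.
have sizeB : forall i, (i < size B)%N -> (#|nth set0 B i| <= 2)%N.
  by move=> i hi; apply: bsz; exact: mem_nth.
have three : forall v u w i j, (i <= j)%N -> (j < size B)%N ->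
    v \in nth set0 B i -> u \in nth set0 B i -> v \in nth set0 B j -> w \in nth set0 B j ->
    (fst w <= fst v)%N -> u != v -> w != v -> u != w -> False.
  move=> v u w i j ij jB vi ui vj wj wv uv wv' uw.
  have wi : w \in nth set0 B i.
    apply: (intp w (fst w) i j) => //.
    by rewrite ij andbT (leq_trans wv) // fst_le.
  have : (2 < #|nth set0 B i|)%N.
    apply/card_gt2P; exists u, v, w; split; first by split.
    by split; rewrite // eq_sym.
  by move=> h; have := sizeB i (leq_ltn_trans ij jB); rewrite leqNgt h.
exists [arg max_(x > v0 in S) fst x]; first by case: arg_maxnP.
case: arg_maxnP => // v vS vmax.
rewrite leqNgt; apply/negP => /card_gt1P[u [w [uN wN uw]]].
move: uN wN; rewrite !inE => /andP[uS evu] /andP[wS evw].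
have uv : u != v by apply/eqP => E; move: evu; rewrite E eirr.
have wv : w != v by apply/eqP => E; move: evw; rewrite E eirr.
have [i [iB vi ui]] := bag _ _ evu.
have [j [jB vj wj]] := bag _ _ evw.
have [ij|ji] := leqP i j.
  exact: (three v u w i j ij jB vi ui vj wj (vmax w wS) uv wv uw).
apply: (three v w u j i (ltnW ji) iB vj wj vi ui (vmax u uS) wv uv).
by rewrite eq_sym.
Qed.
End Pw.
Section PathSec.
Variable n : nat.
Notation e := (@path_rel n).

Lemma path_sym : symmetric e.
Proof. by move=> i j; rewrite /path_rel orbC. Qed.

Lemma path_irr : irreflexive e.
Proof. move=> i; rewrite /path_rel; lia. Qed.

Lemma path_Pdeg : forall S : {set 'I_n}, S != set0 ->
  exists2 v, v \in S & (#|nbrs_in e S v| <= 1)%N.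
Proof.
move=> S /set0Pn[v0 v0S].
exists [arg max_(x > v0 in S) val x]; first by case: arg_maxnP.
case: arg_maxnP => // v vS vmax.
apply/card_le1_eqP => x y; rewrite !inE => /andP[xS exv] /andP[yS eyv].
apply: val_inj; have := vmax x xS; have := vmax y yS.
move: exv eyv; rewrite /path_rel /geq /=; lia.
Qed.

Lemma path_relE (i j : 'I_n) : e i j = ((nat_of_ord i).+1 == nat_of_ord j) || ((nat_of_ord j).+1 == nat_of_ord i).
Proof. by []. Qed.

Definition Pre k := [set i : 'I_n | (i < k)%N].

Lemma fS_ge1 S : (1 <= fS e S)%N.
Proof.
rewrite /fS card_gt0; apply/set0Pn; exists set0; rewrite inE sub0set /=.
by apply/imP => x; rewrite inE.
Qed.

Lemma rec_step k : (2 <= k <= n)%N ->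
  (fS e (Pre k.-1) + fS e (Pre (k - 3)) <= fS e (Pre k))%N.
Proof.
case/andP=> k2 kn.
have hv : (k.-1 < n)%N by lia.
have hu : (k.-2 < n)%N by lia.
set v := Ordinal hv; set u := Ordinal hu.
rewrite (fS_split e (Pre k) v).
have -> : Pre k :\ v = Pre k.-1.
  apply/setP => x; rewrite !inE -val_eqE /=; apply/idP/idP; lia.
rewrite leq_add2l /gS /fS.
set F := [set D : {set 'I_n} | _].
set h := fun D : {set 'I_n} => D :|: [set u; v].
have Flt : forall D y, D \in F -> y \in D -> (nat_of_ord y < k - 3)%N.
  move=> D y; rewrite inE => /andP[/subsetP DS _] /DS; by rewrite inE.
have inj : {in F &, injective h}.
  move=> D1 D2 F1 F2 E; apply/setP => y.
  have /setP/(_ y) := E; rewrite /h !inE -!val_eqE /=.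
  case y1: (y \in D1); case y2: (y \in D2) => //=.
    move=> /esym H; exfalso; have := Flt _ _ F1 y1; lia.
  move=> H; exfalso; have := Flt _ _ F2 y2; lia.
rewrite -(card_in_imset inj); apply: subset_leq_card.
apply/subsetP => _ /imsetP[D FD ->].
move: (FD); rewrite inE => /andP[DS /imP imD].
rewrite /h inE; apply/andP; split; last by rewrite !inE eqxx !orbT.
apply/andP; split.
  apply/subsetP => y; rewrite !inE -!val_eqE /=.
  case yD: (y \in D); first by have := Flt _ _ FD yD; lia.
  rewrite /=; lia.
apply/imP => x; rewrite !inE -!val_eqE /= => hx.
case xD: (x \in D).
  have xlt := Flt _ _ FD xD.
  rewrite -(imD x xD); apply: eq_card => y; rewrite !inE -!val_eqE /=.
  case yD: (y \in D) => //=.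
  rewrite !path_relE; apply/idP/idP => //; lia.
rewrite xD /= in hx.
have [x1 | x2] : nat_of_ord x = k.-2 \/ nat_of_ord x = k.-1 by lia.
  have -> : nbrs_in e (D :|: [set u; v]) x = [set v].
    apply/setP => y; rewrite !inE -!val_eqE /=.
    case yD: (y \in D); first by have := Flt _ _ FD yD; rewrite !path_relE /=; move=> ?; apply/idP/idP; lia.
    rewrite /= !path_relE; apply/idP/idP; lia.
  by rewrite cards1.
have -> : nbrs_in e (D :|: [set u; v]) x = [set u].
  apply/setP => y; rewrite !inE -!val_eqE /=.
  case yD: (y \in D); first by have := Flt _ _ FD yD; rewrite !path_relE /=; move=> ?; apply/idP/idP; lia.
  rewrite /= !path_relE; apply/idP/idP; lia.
by rewrite cards1.
Qed.
End PathSec.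
Fixpoint bseq (k : nat) : nat :=
  match k with
  | 0 => 1 | 1 => 1 | 2 => 2
  | S ((S (S k'')) as k') => (bseq k' + bseq k'')%N
  end.

Lemma bseq_step k : (2 <= k)%N -> bseq k = (bseq k.-1 + bseq (k - 3))%N.
Proof. by case: k => [|[|[|k]]] //= _; rewrite subSS subSS subSS subn0. Qed.

Section Num.
Local Open Scope ring_scope.
Variables (R : rcfType) (alpha : R).
Hypotheses (Ha : 1 < alpha < 2) (Hroot : alpha ^+ 3 - alpha ^+ 2 - 1 = 0).

Lemma a3 : alpha ^+ 3 = alpha ^+ 2 + 1.
Proof. by apply/eqP; rewrite -subr_eq0 opprD addrA Hroot. Qed.

Lemma arec n : alpha ^+ n.+3 = alpha ^+ n.+2 + alpha ^+ n.
Proof. by rewrite -[n.+3]/(3 + n)%N exprD a3 mulrDl mul1r -exprD. Qed.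

Lemma a_ge1 : 1 <= alpha.
Proof. by case/andP: Ha => /ltW. Qed.

Lemma a2 : 2%:R <= alpha ^+ 2.
Proof.
case/andP: Ha => h1 h2; have := a3; rewrite !exprS expr0 !mulr1 => h.
nra.
Qed.

Lemma a_ub : alpha <= 1466%:R / 1000%:R.
Proof.
case/andP: Ha => h1 h2; have := a3; rewrite !exprS expr0 !mulr1 => h.
rewrite leNgt; apply/negP => hc.
set c := 1466%:R / 1000%:R : R in hc.
have c1 : 1 < c by rewrite /c ltr_pdivlMr // mul1r ltr_nat.
have hc' : c * c * c - c * c - 1 > 0.
  rewrite /c; lra.
have p1 : 0 < alpha - c by rewrite subr_gt0.
have p2 : 0 < alpha * alpha + alpha * c + c * c - alpha - c by nra.
have := mulr_gt0 p1 p2.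
nra.
Qed.

Lemma a2_ub : alpha ^+ 2 <= 215%:R / 100%:R.
Proof.
have h := a_ub; have h1 := a_ge1; rewrite expr2; nra.
Qed.

Lemma blow k : (9 <= k)%N -> (89%:R / 100%:R) * alpha ^+ k <= (bseq k)%:R.
Proof.
elim/ltn_ind: k => k IH hk.
have h2 := a2_ub; have h1 := a_ub.
have r0 := arec 0; have r1 := arec 1; have r2 := arec 2; have r3 := arec 3;
have r4 := arec 4; have r5 := arec 5; have r6 := arec 6; have r7 := arec 7;
have r8 := arec 8; rewrite expr0 in r0; rewrite expr1 in r1.
case: k IH hk => [|[|[|[|[|[|[|[|[|[|[|[|k]]]]]]]]]]]] IH hk //.
- rewrite /=; lra.
- rewrite /=; lra.
- rewrite /=; lra.
have -> : bseq k.+4.+4.+4 = (bseq k.+4.+4.+3 + bseq k.+4.+4.+1)%N by [].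
rewrite natrD (arec k.+4.+4.+1) mulrDr.
apply: lerD; apply: IH => //; lia.
Qed.
End Num.
Lemma num_fS (T : finType) (e : rel T) : num_induced_matchings e = fS e setT.
Proof. by apply: eq_card => D; rewrite !inE subsetT. Qed.

Lemma Pre_all n : Pre n n = setT.
Proof. by apply/setP => i; rewrite !inE ltn_ord. Qed.

Lemma path_lower n k : (k <= n)%N -> (bseq k <= fS (@path_rel n) (Pre n k))%N.
Proof.
elim/ltn_ind: k => k IH kn.
case: (leqP 2 k) => k2; last first.
  case: k IH kn k2 => [|[|]] // *; exact: fS_ge1.
rewrite bseq_step //; apply: leq_trans (rec_step n k _); last by rewrite k2 kn.
apply: leq_add; apply: IH; lia.
Qed.

Local Open Scope ring_scope.

Theorem mainTheorem4 (R : rcfType) (alpha : R)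
  (Ha : 1 < alpha < 2) (Hroot : alpha ^+ 3 - alpha ^+ 2 - 1 = 0) :
  (forall (T : finType) (e : rel T), symmetric e -> irreflexive e ->
     pathwidth_le e 1 ->
     (num_induced_matchings e)%:R <= alpha ^+ #|T|)
  /\
  (forall eps : R, 0 < eps -> exists N : nat, forall n : nat, (N <= n)%N ->
     (89%:R / 100%:R) * alpha ^+ n - eps <= (num_induced_matchings (@path_rel n))%:R)
  /\
  (exists c1 c2 : R, [/\ 0 < c1, 0 < c2 &
     exists N : nat, forall n : nat, (N <= n)%N ->
       c1 * alpha ^+ n <= (num_induced_matchings (@path_rel n))%:R <= c2 * alpha ^+ n]).
Proof.
have A1 := a_ge1 _ _ Ha; have A2 := a2 _ _ Ha Hroot; have A3 := a3 _ _ Hroot.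
have up : forall n, (num_induced_matchings (@path_rel n))%:R <= alpha ^+ n.
  move=> n; rewrite num_fS.
  have := fS_upper _ _ (path_sym n) (path_irr n) (@path_Pdeg n) _ _ A1 A2 A3 setT.
  by rewrite cardsT card_ord.
have low : forall n, (9 <= n)%N ->
    (89%:R / 100%:R) * alpha ^+ n <= (num_induced_matchings (@path_rel n))%:R.
  move=> n hn; apply: le_trans (blow _ _ Ha Hroot _ hn) _.
  by rewrite ler_nat num_fS -Pre_all path_lower.
split.
  move=> T e es ei pw; rewrite num_fS.
  have := fS_upper _ _ es ei (pw_Pdeg _ _ ei pw) _ _ A1 A2 A3 setT.
  by rewrite cardsT.
split.
  move=> eps heps; exists 9%N => n hn; have := low n hn; lra.
exists (89%:R / 100%:R), 1; split => //; first by lra.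
exists 9%N => n hn; rewrite mul1r low //=; exact: up.
Qed.
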